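(* Let $n$ be a positive integer, let $\mathbf{A}$ be an infinite $n$-generated subdirectly irreducible bi-Heyting algebra validating $LFC$, let $\mathfrak{X}=\mathbf{A}_*$, and let $m$ be a minimal element of $\mathfrak{X}$ with $X=\{x:m<x\}\uplus min(\mathfrak{X})$ and such that every minimal $y\ne m$ has a unique immediate successor lying strictly above $m$. If $m<x$ and $x$ is not an up limit, then $x$ has at most $2$ immediate predecessors.
   Context: Bi-Heyting algebras are bounded distributive lattices with residuated $\to$ and $\leftarrow$. $\mathbf{A}_*$ is the bi-Esakia dual: prime filters ordered by inclusion with the Priestley topology. For SI $\mathbf{A}$ validating $\mathsf{bi\text{-}LC}$ (bi-intuitionistic logic plus $(p\to q)\vee(q\to p)$), $\mathbf{A}_*$ is a bi-Esakia co-tree: it has a top and principal upsets are chains. $LFC=\mathsf{bi\text{-}LC}+\beta(\mathfrak{F}_0)+\mathcal{J}(\mathfrak{F}_1)+\mathcal{J}(\mathfrak{F}_2)+\mathcal{J}(\mathfrak{F}_3)$. For a finite co-tree $\mathfrak{Y}$: - $\mathfrak{X}\not\models\beta(\mathfrak{Y})$ iff $\mathfrak{Y}$ order-embeds into $\mathfrak{X}$; - $\mathfrak{X}\not\models\mathcal{J}(\mathfrak{Y})$ iff there is a continuous surjective bi-p-morphism onto $\mathfrak{Y}$. The co-trees are: - $\mathfrak{F}_0$: $d<b<a$, $e<c<a$; - $\mathfrak{F}_1$: the chain $c<b<a$; - $\mathfrak{F}_2$: the chain $d<c<b<a$ plus $a'<a$, with $a'$ incomparable to $b,c,d$; - $\mathfrak{F}_3$: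 a top over three incomparable minimal points. A point $x$ with $m<x$ is an up limit if it has no immediate predecessor $z$ with $m\le z$. *)

(* Defs.v *)
From HB Require Import structures.
From mathcomp Require Import all_boot all_order.
Set Implicit Arguments. Unset Strict Implicit. Unset Printing Implicit Defensive.
Import Order.TTheory.
Local Open Scope order_scope.

Record biHeyting (d : Order.disp_t) (L : tbDistrLatticeType d) := BiHeyting {
  bimp : L -> L -> L;
  bcoimp : L -> L -> L;
  bimpP : forall a b c : L, (c <= bimp a b) = (c `&` a <= b);
  bcoimpP : forall a b c : L, (bcoimp a b <= c) = (a <= b `|` c)
}.

Section BiHeytingDefs.
Variables (d : Order.disp_t) (L : tbDistrLatticeType d) (B : biHeyting L).

Inductive bterm (n : nat) : Type :=
| TVar of 'I_n
| TTop | TBot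
| TMeet of bterm n & bterm n
| TJoin of bterm n & bterm n
| TImp of bterm n & bterm n
| TCoimp of bterm n & bterm n.

Fixpoint beval (n : nat) (g : 'I_n -> L) (t : bterm n) : L :=
  match t with
  | TVar i => g i
  | TTop => \top
  | TBot => \bot
  | TMeet t1 t2 => beval g t1 `&` beval g t2
  | TJoin t1 t2 => beval g t1 `|` beval g t2
  | TImp t1 t2 => bimp B (beval g t1) (beval g t2)
  | TCoimp t1 t2 => bcoimp B (beval g t1) (beval g t2)
  end.

Definition n_generated (n : nat) : Prop :=
  exists g : 'I_n -> L, forall a : L, exists t : bterm n, beval g t = a.

Definition infinite_alg : Prop := forall s : seq L, exists x : L, x \notin s.

Definition congruence (th : L -> L -> Prop) : Prop :=
  [/\ (forall a, th a a),
      (forall a b, th a b -> th b a),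
      (forall a b c, th a b -> th b c -> th a c),
      (forall a b a' b', th a a' -> th b b' -> th (a `&` b) (a' `&` b')) &
      (forall a b a' b', th a a' -> th b b' -> th (a `|` b) (a' `|` b'))] /\
  (forall a b a' b', th a a' -> th b b' -> th (bimp B a b) (bimp B a' b')) /\
  (forall a b a' b', th a a' -> th b b' -> th (bcoimp B a b) (bcoimp B a' b')).

Definition nontrivial_rel (th : L -> L -> Prop) : Prop :=
  exists a b, th a b /\ a <> b.

Definition subdirectly_irreducible : Prop :=
  exists th, congruence th /\ nontrivial_rel th /\
    forall ps, congruence ps -> nontrivial_rel ps ->
      forall a b, th a b -> ps a b.

(** * The dual space A_*: prime filters, ordered by inclusion. *)
Definition prime_filter (F : L -> Prop) : Prop :=
  [/\ F \top, ~ F \bot,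
      (forall a b, F a -> a <= b -> F b),
      (forall a b, F a -> F b -> F (a `&` b)) &
      (forall a b, F (a `|` b) -> F a \/ F b)].

Definition pf_le (x y : L -> Prop) : Prop := forall a, x a -> y a.
Definition pf_eq (x y : L -> Prop) : Prop := pf_le x y /\ pf_le y x.
Definition pf_lt (x y : L -> Prop) : Prop := pf_le x y /\ ~ pf_le y x.

(** Open sets of the Priestley topology: basic opens are
    phi(a) \ phi(b) = {x | a \in x, b \notin x}. *)
Definition priestley_open (U : (L -> Prop) -> Prop) : Prop :=
  forall x, prime_filter x -> U x ->
    exists a b, x a /\ ~ x b /\
      forall y, prime_filter y -> y a -> ~ y b -> U y.

Definition pf_minimal (x : L -> Prop) : Prop :=
  prime_filter x /\ forall y, prime_filter y -> pf_le y x -> pf_le x y.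

Definition imm_pred (z x : L -> Prop) : Prop :=
  prime_filter z /\ prime_filter x /\ pf_lt z x /\
  ~ exists w, prime_filter w /\ pf_lt z w /\ pf_lt w x.

Definition up_limit (m x : L -> Prop) : Prop :=
  ~ exists z, imm_pred z x /\ pf_le m z.

Record fposet := FPoset { fp_card : nat; fp_le : rel 'I_fp_card }.

(** F0: a=0, b=1, c=2, d=3, e=4 with d<b<a, e<c<a. *)
Definition F0 : fposet := @FPoset 5 (fun i j =>
  [|| i == j, val j == 0, (val i == 3) && (val j == 1) |
      (val i == 4) && (val j == 2)]%N).
(** F1: chain c<b<a with a=0, b=1, c=2. *)
Definition F1 : fposet := @FPoset 3 (fun i j => (val j <= val i)%N).
(** F2: chain d<c<b<a (a=0,b=1,c=2,d=3) plus a'=4 < a. *)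
Definition F2 : fposet := @FPoset 5 (fun i j =>
  [|| i == j, val j == 0 | [&& val i < 4, val j < 4 & val j <= val i]]%N).
(** F3: top 0 over three incomparable minimal points 1,2,3. *)
Definition F3 : fposet := @FPoset 4 (fun i j => (i == j) || (val j == 0)%N).

Definition order_embeds (Y : fposet) : Prop :=
  exists f : 'I_(fp_card Y) -> (L -> Prop),
    (forall i, prime_filter (f i)) /\
    forall i j, @fp_le Y i j <-> pf_le (f i) (f j).

(** There is a continuous surjective bi-p-morphism from A_* onto Y
    (Y carries the discrete topology). *)
Definition bi_pmorphic_onto (Y : fposet) : Prop :=
  exists f : (L -> Prop) -> 'I_(fp_card Y),
    [/\ (forall x y, prime_filter x -> prime_filter y -> pf_le x y ->
           @fp_le Y (f x) (f y)),
        (forall x j, prime_filter x -> @fp_le Y (f x) j ->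
           exists y, prime_filter y /\ pf_le x y /\ f y = j),
        (forall x j, prime_filter x -> @fp_le Y j (f x) ->
           exists y, prime_filter y /\ pf_le y x /\ f y = j),
        (forall j, exists x, prime_filter x /\ f x = j) &
        (forall j, priestley_open (fun x => f x = j))].

Definition valid_biLC : Prop :=
  forall a b : L, bimp B a b `|` bimp B b a = \top.

(** A validates LFC = bi-LC + beta(F0) + J(F1) + J(F2) + J(F3), using
    X |/= beta(Y) iff Y order-embeds in X, and
    X |/= J(Y) iff there is a continuous surjective bi-p-morphism onto Y. *)
Definition validates_LFC : Prop :=
  [/\ valid_biLC, ~ order_embeds F0, ~ bi_pmorphic_onto F1,
      ~ bi_pmorphic_onto F2 & ~ bi_pmorphic_onto F3].

End BiHeytingDefs.

(* Main.v *)
Require Import Defs.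
From mathcomp Require Import all_boot all_order.
From mathcomp Require Import classical_sets boolp.
From Stdlib Require Import Classical.
Set Implicit Arguments. Unset Strict Implicit. Unset Printing Implicit Defensive.

Section Helpers.
Import Order.TTheory.
Local Open Scope order_scope.
Variables (d : Order.disp_t) (L : tbDistrLatticeType d) (B : biHeyting L).
Implicit Types (u v w : L -> Prop).

Lemma pf_up u a b : prime_filter u -> u a -> a <= b -> u b.
Proof. by case=> _ _ H _ _; apply: H. Qed.
Lemma pf_meet u a b : prime_filter u -> u a -> u b -> u (a `&` b).
Proof. by case=> _ _ _ H _; apply: H. Qed.
Lemma pf_meetE u a b : prime_filter u -> u (a `&` b) -> u a /\ u b.
Proof. move=> pu h; split; apply: (pf_up pu h); [exact: leIl | exact: leIr]. Qed.
Lemma pf_prime u a b : prime_filter u -> u (a `|` b) -> u a \/ u b.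
Proof. by case=> _ _ _ _ H; apply: H. Qed.
Lemma pf_top u : prime_filter u -> u \top.
Proof. by case. Qed.
Lemma pf_bot u : prime_filter u -> ~ u \bot.
Proof. by case. Qed.
Lemma pf_joinl u a b : prime_filter u -> u a -> u (a `|` b).
Proof. move=> pu h; apply: (pf_up pu h); exact: leUl. Qed.
Lemma pf_joinr u a b : prime_filter u -> u b -> u (a `|` b).
Proof. move=> pu h; apply: (pf_up pu h); exact: leUr. Qed.

Lemma notle u v : ~ pf_le u v -> exists a, u a /\ ~ v a.
Proof.
move=> h; apply: NNPP => hn; apply: h => a ua; apply: NNPP => nv; apply: hn.
by exists a.
Qed.

Lemma chain_up (HLC : valid_biLC B) u v1 v2 : prime_filter u ->
  prime_filter v1 -> prime_filter v2 -> pf_le u v1 -> pf_le u v2 ->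
  pf_le v1 v2 \/ pf_le v2 v1.
Proof.
move=> pu p1 p2 h1 h2.
apply: NNPP => /not_or_and [n12 n21].
have [a [a1 a2]] := notle n12.
have [b [b1 b2]] := notle n21.
have : u (bimp B a b `|` bimp B b a) by rewrite HLC; exact: pf_top.
case/(pf_prime pu) => h.
- apply: b2; apply: (pf_up p1 (pf_meet p1 (h1 _ h) a1)).
  by move: (lexx (bimp B a b)); rewrite bimpP.
- apply: a2; apply: (pf_up p2 (pf_meet p2 (h2 _ h) b1)).
  by move: (lexx (bimp B b a)); rewrite bimpP.
Qed.

Lemma coimp_easy u e : prime_filter u -> ~ u e -> u (bcoimp B \top e).
Proof.
move=> pu ne.
have : u (e `|` bcoimp B \top e).
  apply: (pf_up pu (pf_top pu)).
  by move: (lexx (bcoimp B \top e)); rewrite bcoimpP.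
by case/(pf_prime pu).
Qed.

Lemma pft u e : prime_filter u -> u (bcoimp B \top e) ->
  exists v, prime_filter v /\ pf_le v u /\ ~ v e.
Proof.
move=> pu ut.
pose I (c : L) := exists w : L, ~ u w /\ c <= w `|` e.
have Itop : ~ I \top.
  move=> [w [nw le]]; apply: nw; apply: (pf_up pu ut).
  by rewrite bcoimpP joinC.
have Iw : forall c, ~ u c -> I c.
  by move=> c nc; exists c; split => //; exact: leUl.
pose P (F : set L) := [/\ (forall a b, F a -> a <= b -> F b),
   (forall a b, F a -> F b -> F (a `&` b)) & (forall c, F c -> ~ I c)].
have [A [[Aup Ameet AI] Amax]] :
    exists A, P A /\ forall C, proper A C -> ~ P C.
  apply: Zorn_bigcup => F FP Ftot; split.
  - move=> a b [X FX Xa] ab; exists X => //; case: (FP X FX) => h _ _.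
    exact: h Xa ab.
  - move=> a b [X FX Xa] [Y FY Yb]; case: (Ftot X Y FX FY) => XY.
      exists Y => //; case: (FP Y FY) => _ h _; apply: h => //; exact: XY.
    exists X => //; case: (FP X FX) => _ h _; apply: h => //; exact: XY.
  - move=> c [X FX Xc]; case: (FP X FX) => _ _ h; exact: h.
have Atop : A \top.
  apply: NNPP => nA.
  apply: (Amax (fun c => A c \/ c = \top)).
    split; first by move=> c Ac; left.
    move=> h; apply nA; exact: (h \top (or_intror erefl)).
  split.
  - move=> a b [Aa|->] ab; first by left; exact: Aup Aa ab.
    by right; apply/eqP; rewrite eq_le lex1 ab.
  - move=> a b [Aa|->] [Ab|->].
    + by left; exact: Ameet.
    + by left; rewrite meetx1.
    + by left; rewrite meet1x.
    + by right; rewrite meetxx.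
  - move=> c [Ac|->]; [exact: AI | exact: Itop].
have Abot : ~ A \bot.
  move=> Ab; apply: (AI _ Ab); exists \bot; split; [exact: pf_bot pu | exact: le0x].
have Aprime : forall a b, A (a `|` b) -> A a \/ A b.
  move=> a b Aab; apply: NNPP => /not_or_and [na nb].
  have gen : forall a', ~ A a' -> exists (f : L) (w : L), A f /\ ~ u w /\ f `&` a' <= w `|` e.
    move=> a' na'.
    pose Ba := fun c => exists f, A f /\ f `&` a' <= c.
    have : ~ P Ba.
      apply: Amax; split.
        move=> c Ac; exists c; split => //; exact: leIl.
      move=> h; apply: na'; apply: h; exists \top; split => //.
      by rewrite meet1x.
    move=> nP; apply: NNPP => nex; apply: nP; split.
    - move=> c c' [f [Af le]] le'; exists f; split => //; exact: le_trans le le'.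
    - move=> c c' [f [Af le]] [f' [Af' le']]; exists (f `&` f'); split.
        exact: Ameet.
      rewrite lexI; apply/andP; split.
        apply: le_trans le; apply: leI2 (lexx _); exact: leIl.
      apply: le_trans le'; apply: leI2 (lexx _); exact: leIr.
    - move=> c [f [Af le]] [w [nw lw]]; apply: nex; exists f, w; split => //.
      split => //; exact: le_trans le lw.
  case: (gen a na) => f1 [w1 [Af1 [nw1 l1]]].
  case: (gen b nb) => f2 [w2 [Af2 [nw2 l2]]].
  have Ag : A ((f1 `&` f2) `&` (a `|` b)) by apply: (Ameet) => //; exact: Ameet.
  apply: (AI _ Ag); exists (w1 `|` w2); split.
    by case/(pf_prime pu).
  have h1 : f1 `&` f2 `&` a <= w1 `|` w2 `|` e.
    apply: (le_trans (leI2 (leIl f1 f2) (lexx a))).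
    apply: (le_trans l1); exact: leU2 (leUl _ _) (lexx _).
  have h2 : f1 `&` f2 `&` b <= w1 `|` w2 `|` e.
    apply: (le_trans (leI2 (leIr f2 f1) (lexx b))).
    apply: (le_trans l2); exact: leU2 (leUr _ _) (lexx _).
  by rewrite meetUr leUx h1 h2.
exists A; split; first by split.
split.
  move=> c Ac; apply: NNPP => nc; exact: AI Ac (Iw c nc).
move=> Ae; apply: (AI _ Ae); exists \bot; split; [exact: pf_bot pu| exact: leUr].
Qed.


Definition g3 (P Q R : Prop) : 'I_4 :=
  if pselect P then @Ordinal 4 0 erefl else if pselect Q then @Ordinal 4 1 erefl
  else if pselect R then @Ordinal 4 2 erefl else @Ordinal 4 3 erefl.

Lemma g3_congr (P Q R P' Q' R' : Prop) : (P <-> P') -> (Q <-> Q') -> (R <-> R') ->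
  g3 P Q R = g3 P' Q' R'.
Proof. by move=> h1 h2 h3; rewrite (propext h1) (propext h2) (propext h3). Qed.
Lemma g3_0 (P Q R : Prop) : P -> val (g3 P Q R) = 0%N.
Proof. by move=> hP; rewrite /g3; case: pselect. Qed.
Lemma g3_1 (P Q R : Prop) : ~ P -> Q -> val (g3 P Q R) = 1%N.
Proof. by move=> h1 h2; rewrite /g3; case: pselect => // ?; case: pselect. Qed.
Lemma g3_2 (P Q R : Prop) : ~ P -> ~ Q -> R -> val (g3 P Q R) = 2%N.
Proof. by move=> h1 h2 h3; rewrite /g3; case: pselect => // ?; case: pselect => // ?; case: pselect. Qed.
Lemma g3_3 (P Q R : Prop) : ~ P -> ~ Q -> ~ R -> val (g3 P Q R) = 3%N.
Proof. by move=> h1 h2 h3; rewrite /g3; case: pselect => // ?; case: pselect => // ?; case: pselect. Qed.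
Lemma g3_val0 (P Q R : Prop) : val (g3 P Q R) = 0%N -> P.
Proof. by rewrite /g3; case: pselect => // ?; case: pselect => // ?; case: pselect. Qed.

Lemma immeq (p q x : L -> Prop) : imm_pred p x -> imm_pred q x -> pf_le p q -> pf_eq p q.
Proof.
move=> [pp [_ [ltpx nw]]] [pq [_ [ltqx _]]] le; split => //.
apply: NNPP => nqp; apply: nw; exists q; split; first exact: pq.
by split; [split | exact: ltqx].
Qed.

Lemma core (HLC : valid_biLC B) (HF3 : ~ bi_pmorphic_onto L F3) (m : L -> Prop)
  (pm : prime_filter m)
  (Hall : forall x, prime_filter x -> pf_lt m x \/ pf_minimal x)
  (Hsucc : forall y, pf_minimal y -> ~ pf_eq y m ->
     exists z, imm_pred y z /\ pf_lt m z /\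
       forall z', imm_pred y z' -> pf_eq z' z)
  (x z0 yA yB : L -> Prop) :
  pf_le m z0 -> imm_pred z0 x -> imm_pred yA x -> imm_pred yB x ->
  ~ pf_eq yA yB -> ~ pf_eq yA z0 -> ~ pf_eq yB z0 -> False.
Proof.
move=> mz0 iz0 iA iB nAB nAz nBz.
have [pz0 [px [[z0x nxz0] nw0]]] := iz0.
have [pA [_ [[Ax nxA] _]]] := iA.
have [pB [_ [[Bx nxB] _]]] := iB.
have mx : pf_le m x by move=> a /mz0 /z0x.
have [p [pA' pB']] : exists p, yA p /\ ~ yB p.
  apply: notle => h; apply: nAB; exact: immeq iA iB h.
have [q [qA qz]] : exists q, yA q /\ ~ z0 q.
  apply: notle => h; apply: nAz; exact: immeq iA iz0 h.
have [c2 [c2B c2z]] : exists c, yB c /\ ~ z0 c.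
  apply: notle => h; apply: nBz; exact: immeq iB iz0 h.
have [e [ex ez]] := notle nxz0.
pose c1 := p `&` q.
pose et := e `&` bcoimp B \top e.
have c1z : ~ z0 c1 by move=> /(pf_meetE pz0) [_].
have c1B : ~ yB c1 by move=> /(pf_meetE pB) [].
have c1A : yA c1 by apply: pf_meet.
have K1 : forall u, prime_filter u -> pf_le m u -> ~ pf_le x u -> pf_le u z0.
  move=> u pu mu nxu.
  case: (chain_up HLC pm pu px mu mx) => // ux.
  case: (chain_up HLC pm pu pz0 mu mz0) => // z0u.
  case: (classic (pf_le u z0)) => // nuz.
  exfalso; apply: nw0; exists u; split; first exact: pu.
  by split; split.
have K0 : forall u, prime_filter u -> (pf_le x u <-> u et).
  move=> u pu; split.
  - move=> xu; apply: pf_meet => //; first exact: xu.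
    apply: xu; apply: mx; apply: coimp_easy => // me; apply: ez; exact: mz0.
  - move=> uet; have [ue ut] := pf_meetE pu uet.
    case: (Hall u pu) => [[mu _]|[_ umin]].
      apply: NNPP => nxu; apply: ez; exact: K1 u pu mu nxu _ ue.
    have [v [pv [vu nve]]] := pft pu ut.
    by case: nve; exact: umin v pv vu _ ue.
have netI : forall y, imm_pred y x -> ~ y et.
  move=> y [py [_ [[_ nxy] _]]] yet; apply: nxy; exact/(K0 y py).
have netA := netI _ iA. have netB := netI _ iB. have netz := netI _ iz0.
have xet : x et by apply/(K0 x px).
pose f (u : L -> Prop) := g3 (u et) (u c1) (u c2).
have fx : val (f x) = 0%N by apply: g3_0.
have fA : val (f yA) = 1%N by apply: g3_1.
have fB : val (f yB) = 2%N by apply: g3_2.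
have fz : val (f z0) = 3%N by apply: g3_3.
have up_x : forall u, prime_filter u -> exists v, prime_filter v /\ pf_le u v /\ pf_le x v.
  move=> u pu; case: (Hall u pu) => [[mu _]|umin].
    case: (chain_up HLC pm pu px mu mx) => h; first by exists x; split => //; split => // ? ?.
    by exists u; split => //; split => // a.
  case: (classic (pf_eq u m)) => [[um _]|ne].
    by exists x; split => //; split => // a /um /mx.
  have [s [[_ [ps [[us _] _]]] [[ms _] _]]] := Hsucc u umin ne.
  case: (chain_up HLC pm ps px ms mx) => h.
    by exists x; split => //; split => // a /us /h.
  by exists s.
apply: HF3; exists f; split.
- move=> u v pu pv uv /=.
  case: (classic (v et)) => vet.
    by apply/orP; right; apply/eqP; apply: g3_0.
  have nxv : ~ pf_le x v by move/(K0 v pv).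
  have nuet : ~ u et by move=> h; apply: vet; exact: uv _ h.
  apply/orP; left; apply/eqP; apply: g3_congr; first by split.
  + case: (Hall v pv) => [[mv _]|[_ vmin]].
      have vz := K1 v pv mv nxv.
      split => h; [exfalso; apply: c1z; exact: vz (uv _ h) | exfalso; apply: c1z; exact: vz h].
    have vu := vmin u pu uv.
    by split => h; [exact: uv | exact: vu].
  + case: (Hall v pv) => [[mv _]|[_ vmin]].
      have vz := K1 v pv mv nxv.
      split => h; [exfalso; apply: c2z; exact: vz (uv _ h) | exfalso; apply: c2z; exact: vz h].
    have vu := vmin u pu uv.
    by split => h; [exact: uv | exact: vu].
- move=> u j pu /orP [/eqP <-|/eqP j0].
    by exists u; split => //; split => // a.
  have [v [pv [uv xv]]] := up_x u pu.
  exists v; split => //; split => //.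
  apply: val_inj; rewrite j0; apply: g3_0; exact/(K0 v pv).
- move=> u j pu /orP [/eqP ->|/eqP j0].
    by exists u; split => //; split => // a.
  have xu : pf_le x u by apply/(K0 u pu); exact: g3_val0 j0.
  case: j => [[|[|[|[|k]]]] Hk] //.
  + by exists u; split => //; split; [move=> ? ? | apply: val_inj; rewrite j0].
  + exists yA; split => //; split; first by move=> a /Ax /xu.
    by apply: val_inj.
  + exists yB; split => //; split; first by move=> a /Bx /xu.
    by apply: val_inj.
  + exists z0; split => //; split; first by move=> a /z0x /xu.
    by apply: val_inj.
- case=> [[|[|[|[|k]]]] Hk] //.
  + by exists x; split => //; apply: val_inj.
  + by exists yA; split => //; apply: val_inj.
  + by exists yB; split => //; apply: val_inj.
  + by exists z0; split => //; apply: val_inj.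
- move=> j u pu <-.
  case: (classic (u et)) => uet.
    exists et, \bot; split => //; split; first exact: pf_bot.
    move=> y py yet _; apply: val_inj; rewrite /f !g3_0 //.
  case: (classic (u c1)) => uc1.
    exists c1, et; split => //; split => //.
    move=> y py yc ynet; apply: val_inj; rewrite /f !g3_1 //.
  case: (classic (u c2)) => uc2.
    exists c2, (c1 `|` et); split => //; split.
      by case/(pf_prime pu).
    move=> y py yc yn; apply: val_inj; rewrite /f !g3_2 //.
      by move=> h; apply: yn; exact: pf_joinr.
    by move=> h; apply: yn; exact: pf_joinl.
  exists \top, (c1 `|` (et `|` c2)); split; first exact: pf_top.
  split.
    by case/(pf_prime pu) => //; case/(pf_prime pu).
  move=> y py _ yn; apply: val_inj; rewrite /f !g3_3 //.
  + by move=> h; apply: yn; apply: pf_joinr => //; exact: pf_joinl.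
  + by move=> h; apply: yn; exact: pf_joinl.
  + by move=> h; apply: yn; apply: pf_joinr => //; exact: pf_joinr.
Qed.
End Helpers.

Lemma pf_eq_sym d (L : tbDistrLatticeType d) (a b : L -> Prop) : pf_eq a b -> pf_eq b a.
Proof. by case. Qed.
Lemma pf_eq_trans d (L : tbDistrLatticeType d) (a b c : L -> Prop) :
  pf_eq a b -> pf_eq b c -> pf_eq a c.
Proof. by move=> [h1 h2] [h3 h4]; split => t ?; [apply: h3; apply: h1 | apply: h2; apply: h4]. Qed.

Theorem lemma3p28 (d : Order.disp_t) (L : tbDistrLatticeType d)
  (B : biHeyting L) (n : nat) :
  (0 < n)%N ->
  infinite_alg L ->
  n_generated B n ->
  subdirectly_irreducible B ->
  validates_LFC B ->
  forall m : L -> Prop,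
  pf_minimal m ->
  (forall x, prime_filter x -> pf_lt m x \/ pf_minimal x) ->
  (forall y, pf_minimal y -> ~ pf_eq y m ->
     exists z, imm_pred y z /\ pf_lt m z /\
       forall z', imm_pred y z' -> pf_eq z' z) ->
  forall x, prime_filter x -> pf_lt m x -> ~ up_limit m x ->
  forall z1 z2 z3, imm_pred z1 x -> imm_pred z2 x -> imm_pred z3 x ->
    pf_eq z1 z2 \/ pf_eq z1 z3 \/ pf_eq z2 z3.
Proof.
move=> _ _ _ _ [HLC _ _ _ HF3] m [pm _] Hall Hsucc x px mx nup z1 z2 z3 i1 i2 i3.
have [z0 [iz0 mz0]] : exists z, imm_pred z x /\ pf_le m z by apply: NNPP.
apply: NNPP => /not_or_and [n12 /not_or_and [n13 n23]].
have C := core HLC HF3 pm Hall Hsucc mz0 iz0.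
case: (classic (pf_eq z1 z0)) => e1.
  apply: (C z2 z3 i2 i3 n23).
    by move=> e2; apply: n12; apply: pf_eq_trans e1 (pf_eq_sym e2).
  by move=> e3; apply: n13; apply: pf_eq_trans e1 (pf_eq_sym e3).
case: (classic (pf_eq z2 z0)) => e2.
  apply: (C z1 z3 i1 i3 n13 e1).
  by move=> e3; apply: n23; apply: pf_eq_trans e2 (pf_eq_sym e3).
exact: (C z1 z2 i1 i2 n12 e1 e2).
Qed.
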